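(* Let $f_\lambda$ be a probability density on $(0,\infty)$ with finite mean $\mu_\lambda$. Let $P_p$ be a probability distribution on $\{1,\dots,N\}$ with mean $E_p[n]=\sum_n n\,P_p(n)$, and for each $n$ let $g(\cdot\mid n)$ be a probability distribution on $\{0,1,\dots,N\}$ with mean $\overline{g}(n)=\sum_m m\,g(m\mid n)$. Consider random variables $(N_p,N_a,X,T)$ such that: $P\{N_p=n\}=\frac{n}{E_p[n]}P_p(n)$; conditionally on $N_p=n$, $N_a$ has distribution $g(\cdot\mid n)$; conditionally on $N_a=m$, $X$ is distributed as $\lambda_1+\dots+\lambda_m$ with $\lambda_1,\dots,\lambda_m$ i.i.d. with density $f_\lambda$ ($X=0$ if $m=0$); conditionally on $X=x$, $T$ is exponentially distributed with rate $x$ ($T=+\infty$ if $x=0$). Then for every $TTL\ge 0$, $$P\{T\le TTL\}\ \le\ 1-\frac{1}{E_p[n]}\,E_p\!\left[n\, e^{-\overline{g}(n)\,\mu_\lambda\,TTL}\right],$$ where $E_p[h(n)]=\sum_n h(n)P_p(n)$.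
   Context: This models the content access time $T$ of a random content request in an opportunistic network: $P_p(n)$ is the fraction of contents requested by exactly $n$ nodes (content popularity distribution), $g(m\mid n)$ is the probability that a content of popularity $n$ is held by $m$ nodes, $f_\lambda$ is the distribution of pairwise contact rates (inter-contact times exponential), and $X$ is the sum of contact rates between the requester and the holders; $P\{T\le TTL\}$ is the probability the content is accessed by deadline $TTL$. *)

(* Defs.v *)
From HB Require Import structures.
From mathcomp Require Import all_boot all_order all_algebra.
From mathcomp Require Import all_classical all_reals all_analysis.
Set Implicit Arguments. Unset Strict Implicit. Unset Printing Implicit Defensive.
Import Order.TTheory GRing.Theory Num.Theory.
Local Open Scope classical_set_scope.
Local Open Scope ring_scope.
Local Open Scope ereal_scope.

(* [sum_law f m h s] = E[ h(s + lambda_1 + ... + lambda_m) ] where the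
   lambda_i are i.i.d. with density f on (0,+oo): the law of the sum of m
   i.i.d. variables, written as the iterated (m-fold) Lebesgue integral
   against the product density f(l_1)...f(l_m). *)
Fixpoint sum_law (R : realType) (f : R -> R) (m : nat) (h : R -> \bar R)
    (s : R) : \bar R :=
  match m with
  | 0%N => h s
  | m'.+1 => \int[@lebesgue_measure R]_(l in `]0%R, +oo[)
               ((f l)%:E * sum_law f m' h (s + l)%R)
  end.

(* P{T <= t | X = x}: T exponential with rate x, T = +oo when x = 0. *)
Definition exp_cdf (R : realType) (x t : R) : R :=
  if (0 < x)%R then (1 - expR (- (x * t)))%R else 0%R.

Definition Ep_mean (R : realType) (N : nat) (Pp : nat -> R) : R :=
  (\sum_(1 <= n < N.+1) n%:R * Pp n)%R.

Definition gbar (R : realType) (N : nat) (g : nat -> nat -> R) (n : nat) : R :=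
  (\sum_(0 <= m < N.+1) m%:R * g m n)%R.

Definition prob_T_le (R : realType) (N : nat) (Pp : nat -> R)
    (g : nat -> nat -> R) (f : R -> R) (TTL : R) : \bar R :=
  \sum_(1 <= n < N.+1)
     ((n%:R * Pp n / Ep_mean N Pp)%R%:E *
      \sum_(0 <= m < N.+1)
         ((g m n)%:E * sum_law f m (fun x => (exp_cdf x TTL)%:E) 0%R)).

(* Main.v *)
Require Import Defs.
From HB Require Import structures.
From mathcomp Require Import all_boot all_order all_algebra.
From mathcomp Require Import all_classical all_reals all_analysis.
From mathcomp Require Import ring lra.
From mathcomp Require Import measurable_realfun.
Import Order.TTheory GRing.Theory Num.Theory.
Local Open Scope classical_set_scope.
Local Open Scope ring_scope.

Lemma le_integral_nm d (T : measurableType d) (R : realType)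
  (mu : {measure set T -> \bar R}) (D : set T) (f1 f2 : T -> \bar R) :
  (forall x, D x -> (0 <= f1 x)%E) ->
  (forall x, D x -> (f1 x <= f2 x)%E) ->
  (\int[mu]_(x in D) f1 x <= \int[mu]_(x in D) f2 x)%E.
Proof.
move=> f10 f12.
have f20 : forall x, D x -> (0 <= f2 x)%E.
  by move=> x Dx; apply: le_trans (f10 x Dx) (f12 x Dx).
rewrite !ge0_integralE//.
apply: ereal_sup_le => _ [h /= hle <-]; exists h => //= x.
apply: le_trans (hle x) _.
apply: lee_restrict => //.
Qed.

Lemma sum_law_ge0 (R : realType) (f : R -> R) (f_ge0 : forall x, 0 < x -> 0 <= f x)
  m h s : (forall x, (0 <= h x)%E) -> (0 <= sum_law f m h s)%E.
Proof.
move=> h0; elim: m s => [|m IH] s /=; first exact: h0.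
apply: integral_ge0 => l /=; rewrite in_itv /= andbT => l0.
by apply: mule_ge0 => //; rewrite lee_fin f_ge0.
Qed.

Lemma sum_law_lin (R : realType) (f : R -> R) (mu : R)
    (f_meas : measurable_fun (`]0%R, +oo[ : set R) f)
    (f_ge0 : forall x, 0 < x -> 0 <= f x)
    (f_int1 : (\int[@lebesgue_measure R]_(x in `]0%R, +oo[) (f x)%:E = 1)%E)
    (f_mean : (\int[@lebesgue_measure R]_(x in `]0%R, +oo[) (x * f x)%:E
                 = mu%:E)%E) (mu0 : 0 <= mu)
    (A B : R) (A0 : 0 <= A) (B0 : 0 <= B) (h : R -> \bar R)
    (h0 : forall x, (0 <= h x)%E)
    (hle : forall x, 0 <= x -> (h x <= (A + B * x)%:E)%E) :
  forall m s, 0 <= s -> (sum_law f m h s <= (A + B * (s + m%:R * mu))%:E)%E.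
Proof.
elim=> [|m IH] s s0 /=; first by rewrite mul0r addr0 hle.
have Dm : measurable (`]0%R, +oo[ : set R) by [].
apply: (@le_trans _ _ (\int[@lebesgue_measure R]_(l in `]0%R, +oo[)
   ((A + B * (s + m%:R * mu)) * f l + B * (l * f l))%:E)%E).
  apply: le_integral_nm => l; rewrite /= in_itv /= andbT => l0.
    by apply: mule_ge0; [rewrite lee_fin f_ge0|apply: sum_law_ge0].
  have fl0 : 0 <= f l by apply: f_ge0.
  apply: (@le_trans _ _ ((f l)%:E * (A + B * (s + l + m%:R * mu))%:E)%E).
    apply: lee_wpmul2l; first by rewrite lee_fin.
    by apply: IH; rewrite addr_ge0 // ltW.
  by rewrite -EFinM lee_fin le_eqVlt; apply/orP; left; apply/eqP; ring.
under eq_integral => l _ do rewrite EFinD !EFinM.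
have Cge0 : 0 <= A + B * (s + m%:R * mu).
  by rewrite addr_ge0 // mulr_ge0 // addr_ge0 // mulr_ge0.
rewrite ge0_integralD //; last 4 first.
- move=> l; rewrite /= in_itv /= andbT => l0.
  by apply: mule_ge0; rewrite lee_fin // f_ge0.
- apply/measurable_EFinP; apply: measurable_funM => //.
- move=> l; rewrite /= in_itv /= andbT => l0.
  by apply: mule_ge0; rewrite lee_fin //; apply: mulr_ge0; [exact: ltW|exact: f_ge0].
- apply/measurable_EFinP; apply: measurable_funM => //.
  apply: measurable_funM => //.
rewrite ge0_integralZl_EFin //; last 2 first.
- by move=> l; rewrite /= in_itv /= andbT => l0; rewrite lee_fin f_ge0.
- exact/measurable_EFinP.
rewrite ge0_integralZl_EFin //; last 2 first.
- by move=> l; rewrite /= in_itv /= andbT => l0; rewrite lee_fin; apply: mulr_ge0; [exact: ltW|exact: f_ge0].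
- by apply/measurable_EFinP; apply: measurable_funM.
rewrite f_int1 f_mean -!EFinM -EFinD lee_fin le_eqVlt; apply/orP; left; apply/eqP.
rewrite -[m.+1]addn1 natrD; ring.
Qed.

Lemma tangent_expR (R : realType) (y c : R) : expR c * (1 + y - c) <= expR y.
Proof.
have -> : expR y = expR c * expR (y - c) by rewrite -expRD; congr expR; ring.
by apply: ler_wpM2l; [exact: expR_ge0|]; rewrite -addrA; exact: expR_ge1Dx.
Qed.

Lemma exp_cdf_ge0 (R : realType) (x t : R) : 0 <= t -> 0 <= exp_cdf x t.
Proof.
move=> t0; rewrite /exp_cdf; case: ifP => // x0.
rewrite subr_ge0 expR_le1 oppr_le0; exact: mulr_ge0 (ltW x0) t0.
Qed.

Lemma exp_cdf_le (R : realType) (x t c : R) : 0 <= t -> 0 <= x ->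
  exp_cdf x t <= (1 - expR c * (1 - c)) + expR c * t * x.
Proof.
move=> t0 x0; rewrite /exp_cdf; case: ifP => _.
  have := @tangent_expR R (- (x * t)) c.
  move=> H; apply: (le_trans _ (_ : 1 - expR c * (1 + - (x * t) - c) <= _)).
    by rewrite lerB.
  by rewrite le_eqVlt; apply/orP; left; apply/eqP; ring.
have := @tangent_expR R 0 c; rewrite expR0 addr0 => H.
have : 0 <= expR c * t * x by rewrite !mulr_ge0 // expR_ge0.
move=> H2; rewrite -subr_ge0 in H; lra.
Qed.

Theorem theorem2 (R : realType) (f : R -> R) (mu : R) (N : nat)
    (Pp : nat -> R) (g : nat -> nat -> R) (TTL : R)
    (* f is a probability density on (0, +oo) with finite mean mu *)
    (f_meas : measurable_fun (`]0%R, +oo[ : set R) f)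
    (f_ge0 : forall x, 0 < x -> 0 <= f x)
    (f_int1 : (\int[@lebesgue_measure R]_(x in `]0%R, +oo[) (f x)%:E = 1)%E)
    (f_mean : (\int[@lebesgue_measure R]_(x in `]0%R, +oo[) (x * f x)%:E
                 = mu%:E)%E)
    (* P_p is a probability distribution on {1, ..., N} *)
    (Pp_ge0 : forall n, (1 <= n <= N)%N -> 0 <= Pp n)
    (Pp_sum1 : \sum_(1 <= n < N.+1) Pp n = 1)
    (* each g(. | n) is a probability distribution on {0, ..., N} *)
    (g_ge0 : forall n m, (1 <= n <= N)%N -> (m <= N)%N -> 0 <= g m n)
    (g_sum1 : forall n, (1 <= n <= N)%N -> \sum_(0 <= m < N.+1) g m n = 1)
    (TTL_ge0 : 0 <= TTL) :
  (prob_T_le N Pp g f TTL <=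
   (1 - (Ep_mean N Pp)^-1 *
        \sum_(1 <= n < N.+1)
           n%:R * expR (- (gbar N g n * mu * TTL)) * Pp n)%:E)%E.
Proof.
have mu0 : 0 <= mu.
  rewrite -lee_fin -f_mean; apply: integral_ge0 => x; rewrite /= in_itv /= andbT => x0.
  by rewrite lee_fin; apply: mulr_ge0; [exact: ltW|exact: f_ge0].
set E := Ep_mean N Pp.
have E1 : 1 <= E.
  rewrite -Pp_sum1 /E /Ep_mean big_nat_cond [leRHS]big_nat_cond.
  apply: ler_sum => n /andP[/andP[n1 nN] _].
  rewrite -[leLHS]mul1r; apply: ler_wpM2r; first by apply: Pp_ge0; rewrite n1.
  by rewrite ler1n.
have E0 : 0 < E by apply: lt_le_trans E1.
pose c n := - (gbar N g n * mu * TTL).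
pose A n := 1 - expR (c n) * (1 - c n).
pose B n := expR (c n) * TTL.
have A0 n : 0 <= A n.
  have := @tangent_expR R 0 (c n); rewrite expR0 addr0 /A => H; lra.
have B0 n : 0 <= B n by rewrite /B mulr_ge0 // expR_ge0.
apply: (@le_trans _ _ (\sum_(1 <= n < N.+1)
     ((n%:R * Pp n / E)%:E * \sum_(0 <= m < N.+1)
        ((g m n)%:E * (A n + B n * (0 + m%:R * mu))%:E)))%E).
  rewrite /prob_T_le -/E big_nat_cond [leRHS]big_nat_cond.
  apply: lee_sum => n /andP[/andP[n1 nN] _].
  have nN' : (1 <= n <= N)%N by rewrite n1 -ltnS.
  apply: lee_wpmul2l.
    by rewrite lee_fin !mulr_ge0 // ?Pp_ge0 // invr_ge0 ltW.
  rewrite big_nat_cond [leRHS]big_nat_cond.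
  apply: lee_sum => m /andP[/andP[_ mN] _].
  apply: lee_wpmul2l; first by rewrite lee_fin g_ge0.
  have h0 : forall x, (0 <= (exp_cdf x TTL)%:E)%E.
    by move=> x; rewrite lee_fin exp_cdf_ge0.
  have hle : forall x, 0 <= x -> ((exp_cdf x TTL)%:E <= (A n + B n * x)%:E)%E.
    by move=> x x0; rewrite lee_fin /B /A; apply: exp_cdf_le.
  exact: (@sum_law_lin R f mu f_meas f_ge0 f_int1 f_mean mu0 _ _ (A0 n) (B0 n) _ h0 hle m 0 (lexx 0)).
under eq_bigr => n _ do under eq_bigr => m _ do rewrite -EFinM.
under eq_bigr => n _ do rewrite sumEFin -EFinM.
rewrite sumEFin lee_fin.
have inner n : (1 <= n <= N)%N ->
  \sum_(0 <= m < N.+1) g m n * (A n + B n * (0 + m%:R * mu)) = 1 - expR (c n).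
  move=> nN.
  rewrite (eq_bigr (fun m => A n * g m n + (B n * mu) * (m%:R * g m n))); last first.
    by move=> m _; ring.
  rewrite big_split /= -!mulr_sumr g_sum1 // -/(gbar N g n).
  by rewrite /A /B /c; set e := expR _; set G := gbar N g n; ring.
rewrite big_nat_cond.
rewrite (eq_bigr (fun n => E^-1 * (n%:R * Pp n) - E^-1 * (n%:R * expR (c n) * Pp n))); last first.
  move=> n /andP[/andP[n1 nN] _].
  rewrite inner; last by rewrite n1 -ltnS.
  by set e := expR _; set w := Pp n; set Ei := E^-1; rewrite mulrBr mulr1 /Ei; ring.
rewrite sumrB -!mulr_sumr -big_nat_cond -/(Ep_mean N Pp) -/E mulVf ?gt_eqF //.
rewrite -big_nat_cond.
exact: lexx.
Qed.
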